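(* Let $\Omega\in\mathscr A$ be a $1$-admissible set with $\mathscr C_1(\Omega)\neq\emptyset$. If (P.4), (P.5) and (P.6) hold, then there exist $1$-Cheeger sets of $\Omega$ of minimal $\mathfrak m$-measure among all $1$-Cheeger sets of $\Omega$.
   Context: $(X,\mathscr A,\mathfrak m)$ is a non-negative $\sigma$-finite measure space; for $A,B\in\mathscr A$, ''$A\subset B$'' means $\mathfrak m(A\setminus B)=0$. $P\colon\mathscr A\to[0,+\infty]$ is a proper functional. (P.4): if $\chi_{E_k}\to\chi_E$ in $L^1(X,\mathfrak m)$ then $P(E)\le\liminf_k P(E_k)$. (P.5): for every $c\ge0$, $\{\chi_E:E\in\mathscr A,\ P(E)\le c\}$ is compact in $L^1(X,\mathfrak m)$. (P.6): there is $f\colon(0,+\infty)\to(0,+\infty)$ with $\lim_{\varepsilon\to0^+}f(\varepsilon)=+\infty$ such that $\mathfrak m(E)\le\varepsilon$ implies $P(E)\ge f(\varepsilon)\mathfrak m(E)$. $\Omega$ is $1$-admissible if it contains some $E$ with $0<\mathfrak m(E)<+\infty$, $P(E)<+\infty$; $h_1(\Omega)=\inf\{P(E)/\mathfrak m(E): E\subset\Omega,\ 0<\mathfrak m(E)<+\infty,\ P(E)<+\infty\}$; minimizers are $1$-Cheeger sets, forming $\mathscr C_1(\Omega)$. *)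

(* Defs.v *)
From HB Require Import structures.
From mathcomp Require Import all_boot all_order all_algebra.
From mathcomp Require Import all_classical all_reals all_analysis.
Set Implicit Arguments. Unset Strict Implicit. Unset Printing Implicit Defensive.
Import Order.TTheory GRing.Theory Num.Theory.
Local Open Scope classical_set_scope.
Local Open Scope ring_scope.

Section Cheeger.
Context (d : measure_display) (X : measurableType d) (R : realType).
Variable m : {measure set X -> \bar R}.
Variable P : set X -> \bar R.

Definition ae_sub (A B : set X) : Prop := m (A `\` B) = 0%E.

Definition chi_L1_cvg (E : nat -> set X) (F : set X) : Prop :=
  (\int[m]_x (`|\1_(E k) x - \1_F x| : R)%:E)%E @[k --> \oo] --> 0%E.

Definition proper_functional : Prop :=
  (forall E, measurable E -> (0 <= P E)%E) /\
  exists E, measurable E /\ (P E < +oo)%E.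

Definition P4 : Prop :=
  forall (E : nat -> set X) (F : set X),
    (forall k, measurable (E k)) -> (forall k, (m (E k) < +oo)%E) ->
    measurable F -> (m F < +oo)%E ->
    chi_L1_cvg E F ->
    (P F <= limn_einf (fun k => P (E k)))%E.

(* (P.5) {chi_E : P(E) <= c} is (sequentially) compact in L^1(X, m) *)
Definition P5 : Prop :=
  forall c : R, 0 <= c ->
  forall E : nat -> set X,
    (forall k, measurable (E k)) -> (forall k, (m (E k) < +oo)%E) ->
    (forall k, (P (E k) <= c%:E)%E) ->
    exists (phi : nat -> nat) (F : set X),
      {homo phi : i j / (i < j)%N >-> (i < j)%N} /\
      measurable F /\ (m F < +oo)%E /\ (P F <= c%:E)%E /\
      chi_L1_cvg (E \o phi) F.

Definition P6 : Prop :=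
  exists f : R -> R,
    (forall e, 0 < e -> 0 < f e) /\
    (f e @[e --> 0^'+] --> +oo) /\
    (forall (e : R) (E : set X), 0 < e -> measurable E -> (m E <= e%:E)%E ->
       ((f e)%:E * m E <= P E)%E).

Definition cheeger_competitor (Om E : set X) : Prop :=
  measurable E /\ ae_sub E Om /\ (0 < m E)%E /\ (m E < +oo)%E /\ (P E < +oo)%E.

Definition ratio (E : set X) : \bar R := (P E * ((fine (m E))^-1)%:E)%E.

Definition admissible1 (Om : set X) : Prop := exists E, cheeger_competitor Om E.

Definition h1 (Om : set X) : \bar R :=
  ereal_inf [set ratio E | E in cheeger_competitor Om].

Definition cheeger1 (Om : set X) : set (set X) :=
  [set E | cheeger_competitor Om E /\ ratio E = h1 Om].

End Cheeger.

(* Main.v *)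
Require Import Defs.
From HB Require Import structures.
From mathcomp Require Import all_boot all_order all_algebra.
From mathcomp Require Import all_classical all_reals all_analysis.
From mathcomp Require Import measurable_realfun.
Import Order.TTheory GRing.Theory Num.Theory.
Local Open Scope classical_set_scope.
Local Open Scope ring_scope.
Lemma inv_small {R : realType} {eps : R} : 0 < eps ->
  exists K, forall k, (K <= k)%N -> (k.+1%:R)^-1 < eps.
Proof.
move=> e0; exists (Num.truncn (eps^-1)) => k Kk.
rewrite -[eps]invrK ltf_pV2 ?posrE ?invr_gt0 ?ltr0Sn //.
rewrite (lt_le_trans (truncnS_gt _)) // ler_nat ltnS //.
Qed.

Lemma liminf_le (R : realType) (u : (\bar R)^nat) x :
  (forall n, exists2 k, (n <= k)%N & (u k <= x)%E) -> (limn_einf u <= x)%E.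
Proof.
move=> H; rewrite limn_einf_lim (cvg_lim _ (@cvg_einfs_sup R u)) //.
apply: ub_ereal_sup => _ [n _ <-]; have [k nk ukx] := H n.
apply: le_trans ukx; apply: ereal_inf_lbound; by exists k.
Qed.

Lemma phi_ge {phi : nat -> nat} : {homo phi : i j / (i < j)%N >-> (i < j)%N} ->
  forall k, (k <= phi k)%N.
Proof.
move=> H; elim=> // k IH; apply: leq_ltn_trans IH _; exact: H.
Qed.

Lemma cvg0_small (R : realType) (w : (\bar R)^nat) : w @ \oo --> 0%E ->
  forall eps : R, 0 < eps -> exists N, forall k, (N <= k)%N -> (w k < eps%:E)%E.
Proof.
move=> H eps e0.
have := H _ (open_ereal_lt' (_ : 0 < eps%:E)%E).
rewrite lte_fin => /(_ e0) [N _ HN]; exists N => k Nk; exact: HN.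
Qed.

Lemma diff_le (d : measure_display) (X : measurableType d) (R : realType)
  (m : {measure set X -> \bar R}) (A B : set X) :
  measurable A -> measurable B ->
  (m (A `\` B) <= \int[m]_x (`|\1_A x - \1_B x| : R)%:E)%E.
Proof.
move=> mA mB.
have mAB : measurable (A `\` B) by exact: measurableD.
rewrite -[A `\` B]setIT -integral_indic //.
apply: ge0_le_integral => //.
- apply/measurable_EFinP; exact: measurable_indic.
- apply/measurable_EFinP; apply: measurableT_comp => //.
  by apply: measurable_funB; exact: measurable_indic.
- move=> x _; rewrite lee_fin !indicE.
  case: (pselect (A x)) => Ax; case: (pselect (B x)) => Bx.
  + rewrite (@memNset _ (A `\` B) x); last by case.
    by rewrite /= normr_ge0.
  + rewrite (mem_set Ax) (memNset Bx) (mem_set (conj Ax Bx : (A `\` B) x)).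
    by rewrite /= subr0 normr1.
  + rewrite (@memNset _ (A `\` B) x); last by case.
    by rewrite /= normr_ge0.
  + rewrite (@memNset _ (A `\` B) x); last by case.
    by rewrite /= normr_ge0.
Qed.

Lemma int_sym (d : measure_display) (X : measurableType d) (R : realType)
  (m : {measure set X -> \bar R}) (A B : set X) :
  (\int[m]_x (`|\1_A x - \1_B x| : R)%:E = \int[m]_x (`|\1_B x - \1_A x| : R)%:E)%E.
Proof. by apply: eq_integral => x _; rewrite distrC. Qed.

Theorem proposition3p15 (d : measure_display) (X : measurableType d) (R : realType)
  (m : {measure set X -> \bar R}) (P : set X -> \bar R) (Om : set X) :
  sigma_finite setT m ->
  proper_functional P ->
  measurable Om ->
  admissible1 m P Om ->
  cheeger1 m P Om !=set0 ->
  P4 m P -> P5 m P -> P6 m P ->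
  exists E, cheeger1 m P Om E /\
    (forall F, cheeger1 m P Om F -> (m E <= m F)%E).
Proof.
move=> _ [Pge0 _] mOm _ [E0 CE0] P4h P5h [f [fpos [fcvg fP]]].
have compF : forall E, cheeger_competitor m P Om E ->
   m E = (fine (m E))%:E /\ 0 < fine (m E) /\ P E = (fine (P E))%:E /\ 0 <= fine (P E).
  move=> E [mE [_ [m0 [mfin Pfin]]]].
  have mge : (0 <= m E)%E := measure_ge0 m E.
  split; first by rewrite fineK // ge0_fin_numE.
  split; first by apply: fine_gt0; rewrite m0 mfin.
  split; first by rewrite fineK // ge0_fin_numE // Pge0.
  exact: fine_ge0 (Pge0 _ mE).
have [cE0 rE0] := CE0.
have [mE0 [mE0p [PE0 PE0p]]] := compF _ cE0.
set h0 := fine (P E0) / fine (m E0).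
have h0p : 0 <= h0 by rewrite divr_ge0 // ltW.
have hE : h1 m P Om = h0%:E by rewrite -rE0 /Defs.ratio PE0 -EFinM.
have key : forall E, cheeger1 m P Om E -> P E = (h0 * fine (m E))%:E.
  move=> E [cE rE]; have [mE [mEp [PE PEp]]] := compF _ cE.
  move: rE; rewrite /Defs.ratio hE PE -EFinM => hr; have {}hr := EFin_inj hr.
  by rewrite -hr divfK // gt_eqF.
have [e [e0 feh]] : exists e, 0 < e /\ h0 < f e.
  have : \forall x \near 0^'+, 0 < x /\ h0 < f x.
    near=> x; split; [near: x; exact: nbhs_right_gt | near: x; exact: cvgry_gt].
  by move=> /filter_ex [x hx]; exists x.
have mbig : forall E, cheeger1 m P Om E -> (e%:E < m E)%E.
  move=> E CE; have [cE _] := CE; have [mE [mEp [PE PEp]]] := compF _ cE.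
  rewrite ltNge; apply/negP => le.
  have := fP e E e0 (proj1 cE) le.
  rewrite key // [in X in (_ * X)%E]mE -EFinM lee_fin ler_pM2r //.
  by rewrite leNgt feh.
set mu := ereal_inf [set m E | E in cheeger1 m P Om].
have mu_ge : (e%:E <= mu)%E.
  by apply: le_ereal_inf_tmp => _ [E CE <-]; apply: ltW; exact: mbig.
have mu_le : (mu <= m E0)%E by apply: ereal_inf_lbound; exists E0.
have mufin : mu \is a fin_num.
  rewrite ge0_fin_numE; last by apply: le_trans mu_ge; rewrite lee_fin ltW.
  by rewrite (le_lt_trans mu_le) // mE0 ltey.
set mu0 := fine mu.
have muE : mu = mu0%:E by rewrite fineK.
have emu : e <= mu0 by rewrite -lee_fin -muE.
have Hex : forall k : nat, exists E, cheeger1 m P Om E /\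
    (m E < mu + ((k.+1%:R)^-1)%:E)%E.
  move=> k.
  have ik : 0 < (k.+1%:R)^-1 :> R by rewrite invr_gt0 ltr0Sn.
  have [_ [E CE <-] lt] := lb_ereal_inf_adherent ik mufin.
  by exists E.
have [Es HEs] := choice Hex.
have gk : forall k, fine (m (Es k)) < mu0 + (k.+1%:R)^-1.
  move=> k; have [[cE _] lt] := HEs k; have [mE _] := compF _ cE.
  by rewrite -lte_fin EFinD -muE -mE.
set c := h0 * (mu0 + 1).
have c0 : 0 <= c.
  by rewrite mulr_ge0 // addr_ge0 // (le_trans (ltW e0)).
have PEs : forall k, (P (Es k) <= c%:E)%E.
  move=> k; rewrite key; last exact: (proj1 (HEs k)).
  rewrite lee_fin ler_wpM2l // (le_trans (ltW (gk k))) // lerD2l.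
  by rewrite invf_le1 ?ltr0Sn // ler1n.
have [phi [F [phih [mF [mFfin [PFc Fcvg]]]]]] := P5h c c0 Es
  (fun k => proj1 (proj1 (proj1 (HEs k))))
  (fun k => proj1 (proj2 (proj2 (proj2 (proj1 (proj1 (HEs k))))))) PEs.
have small : forall eps : R, 0 < eps -> exists N, forall k, (N <= k)%N ->
  (\int[m]_x (`|\1_(Es (phi k)) x - \1_F x| : R)%:E < eps%:E)%E.
  have Fc := Fcvg; move: Fc; rewrite /chi_L1_cvg => /cvg0_small H eps ep.
  exact: H eps ep.
have mEs : forall k, measurable (Es k) := fun k => proj1 (proj1 (proj1 (HEs k))).
have dF : forall k, (m (F `\` Es (phi k)) <=
    \int[m]_x (`|\1_(Es (phi k)) x - \1_F x| : R)%:E)%E.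
  by move=> k; rewrite int_sym; exact: diff_le.
have dG : forall k, (m (Es (phi k) `\` F) <=
    \int[m]_x (`|\1_(Es (phi k)) x - \1_F x| : R)%:E)%E.
  by move=> k; exact: diff_le.
have phik := phi_ge (phi:=phi) phih.
have mF_le : (m F <= mu)%E.
  apply/lee_addgt0Pr => eps ep.
  have e2 : 0 < eps / 2 by rewrite divr_gt0 // ?(ltW ep).
  have [N HN] := small _ e2; have [K HK] := inv_small e2.
  set k := maxn N K.
  have Nk : (N <= k)%N := leq_maxl N K.
  have Kk : (K <= phi k)%N := leq_trans (leq_maxr N K) (phik k).
  have [_ lt] := HEs (phi k).
  rewrite (measureDI m mF (mEs (phi k))).
  apply: le_trans (_ : (eps / 2)%:E + m (Es (phi k)) <= _)%E.
    apply: leeD; first exact: ltW (le_lt_trans (dF k) (HN k Nk)).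
    apply: le_measure; rewrite ?inE; [exact: measurableI|exact: mEs|by move=> x []].
  apply: le_trans (_ : (eps / 2)%:E + (mu + (eps / 2)%:E) <= _)%E.
    apply: leeD => //; apply: ltW; apply: (lt_le_trans lt).
    by apply: leeD => //; rewrite lee_fin; exact/ltW/HK.
  by rewrite muE -!EFinD addrCA -splitr.
have mu_le_F : (mu <= m F)%E.
  apply/lee_addgt0Pr => eps ep.
  have [N HN] := small _ ep.
  apply: le_trans (_ : m (Es (phi N)) <= _)%E.
    by apply: ereal_inf_lbound; exists (Es (phi N)) => //; exact: (proj1 (HEs _)).
  rewrite (measureDI m (mEs (phi N)) mF) addeC.
  apply: leeD.
    apply: le_measure; rewrite ?inE; [exact: measurableI|exact: mF|by move=> x []].
  exact: ltW (le_lt_trans (dG N) (HN N (leqnn N))).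
have mFE : m F = mu by apply/eqP; rewrite eq_le mF_le mu_le_F.
have aeF : ae_sub m F Om.
  rewrite /ae_sub; apply/eqP; rewrite eq_le measure_ge0 andbT.
  apply/lee_addgt0Pr => eps ep; rewrite add0e.
  have [N HN] := small _ ep.
  have [[[_ [aeG _]] _] _] := HEs (phi N).
  have mA : measurable (F `\` Es (phi N)) by exact: measurableD.
  have mB : measurable (Es (phi N) `\` Om) by exact: measurableD.
  apply: le_trans (_ : m ((F `\` Es (phi N)) `|` (Es (phi N) `\` Om)) <= _)%E.
    apply: le_measure; rewrite ?inE; [exact: measurableD|exact: measurableU|].
    move=> x [Fx nOx]; case: (pselect (Es (phi N) x)) => Gx; [by right|by left].
  apply: le_trans (measureU2 m mA mB) _.
  set z := (X in (_ + X <= _)%E).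
  have z0 : z = 0%E by exact: aeG.
  rewrite z0 adde0.
  exact: ltW (le_lt_trans (dF N) (HN N (leqnn N))).
have h1p : 0 < h0 + 1 by rewrite (le_lt_trans h0p) // ltrDl ltr01.
have PFle : (P F <= (h0 * mu0)%:E)%E.
  apply/lee_addgt0Pr => eps ep.
  apply: le_trans (P4h (Es \o phi) F (fun k => mEs (phi k))
    (fun k => proj1 (proj2 (proj2 (proj2 (proj1 (proj1 (HEs (phi k)))))))) mF mFfin Fcvg) _.
  apply: liminf_le => n.
  have e' : 0 < eps / (h0 + 1) by rewrite divr_gt0 // ?(ltW ep).
  have [K HK] := inv_small e'.
  exists (maxn n K); first exact: leq_maxl.
  rewrite /= key; last exact: proj1 (HEs _).
  rewrite -EFinD lee_fin.
  apply: le_trans (_ : h0 * (mu0 + eps / (h0 + 1)) <= _).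
    rewrite ler_wpM2l //; apply: ltW; apply: lt_le_trans (gk _) _.
    rewrite lerD2l; apply: ltW; apply: HK.
    exact: leq_trans (leq_maxr n K) (phik _).
  rewrite mulrDr lerD2l mulrCA.
  apply: ler_piMr; first exact: ltW ep.
  by rewrite ler_pdivrMr // mul1r lerDl.
have mu0p : 0 < mu0 := lt_le_trans e0 emu.
have mF0 : fine (m F) = mu0 by rewrite mFE.
have cF : cheeger_competitor m P Om F.
  split; first exact: mF.
  split; first exact: aeF.
  split; first by rewrite mFE (lt_le_trans _ mu_ge) // lte_fin.
  split; first exact: mFfin.
  exact: le_lt_trans PFc (ltry _).
exists F; split.
  split=> //; apply/eqP; rewrite eq_le; apply/andP; split.
    rewrite /Defs.ratio hE mF0.
    apply: le_trans (lee_wpmul2r _ PFle) _; first by rewrite lee_fin invr_ge0 ltW.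
    by rewrite -EFinM lee_fin mulfK // gt_eqF.
  by apply: ereal_inf_lbound; exists F.
by move=> F' CF'; rewrite mFE; apply: ereal_inf_lbound; exists F'.
Unshelve. all: by end_near. Qed.
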